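(* Let $k,k'$ be arbitrary fields and $K|k$, $K'|k'$ field extensions of degree $\geq3$ (possibly infinite). Suppose $\varphi:K'^\times/k'^\times\to K^\times/k^\times$ is simultaneously a homomorphism of abelian groups and a projective embedding. Then there is a unique field homomorphism $\Phi:K'\to K$ lifting $\varphi$ (i.e. $\varphi(x\bmod k'^\times)=\Phi(x)\bmod k^\times$ for all $x\in K'^\times$) that restricts to an isomorphism $k'\cong k$.
   Context: For a vector space $V$ over a field $k$, its projectivisation $\mathbb P_kV=(V\setminus\{0\})/k^\times$ is regarded with the projective lines (images of $2$-dimensional subspaces) as distinguished subsets. $K^\times/k^\times=\mathbb P_kK$ with $K$ viewed as a $k$-vector space. A map $\mathbb P_{k'}V'\to\mathbb P_kV$ is a projective embedding if it is injective and maps lines onto lines. *)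

(* Defs.v *)
From HB Require Import structures.
From mathcomp Require Import all_boot all_order all_algebra.
Set Implicit Arguments. Unset Strict Implicit. Unset Printing Implicit Defensive.
Import GRing.Theory.
Local Open Scope ring_scope.
Local Open Scope quotient_scope.

(* A field extension K|k is represented by a field K together with a subfield
   k of K, given as a predicate on K closed under 1, -, * and inverses. *)
Section Proj.
Variables (K : fieldType) (k : divringClosed K).

Definition nzK := {x : K | x != 0}.
HB.instance Definition _ := Choice.on nzK.

Definition projrel (x y : nzK) : bool := (val x / val y \in k).

Lemma projrel_refl : reflexive projrel.
Proof. by case=> x /= nx; rewrite /projrel /= mulfV // rpred1. Qed.

Lemma projrel_sym : symmetric projrel.
Proof.
by case=> x nx [y ny]; rewrite /projrel /= -rpredV invf_div.
Qed.

Lemma projrel_trans : transitive projrel.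
Proof.
case=> y ny [x nx] [z nz]; rewrite /projrel /= => hxy hyz.
have -> : x / z = (x / y) * (y / z) by rewrite mulrA divfK.
exact: rpredM.
Qed.

Canonical projrel_equiv :=
  EquivRel projrel projrel_refl projrel_sym projrel_trans.

Definition Proj := {eq_quot projrel}.

Definition one_nz : nzK := exist _ 1 (oner_neq0 K).

(* class of a nonzero x in P_k K (junk value for x = 0) *)
Definition pcl (x : K) : Proj := \pi_Proj (insubd one_nz x).

Definition pmul (a b : Proj) : Proj := pcl (val (repr a) * val (repr b)).

Definition indep2 (u v : K) : Prop :=
  forall a b, a \in k -> b \in k -> a * u + b * v = 0 -> a = 0 /\ b = 0.

Definition indep3 (u v w : K) : Prop :=
  forall a b c, a \in k -> b \in k -> c \in k ->
    a * u + b * v + c * w = 0 -> [/\ a = 0, b = 0 & c = 0].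

Definition degree_ge3 : Prop := exists u v w, indep3 u v w.

Definition pline (u v : K) (p : Proj) : Prop :=
  exists a b, [/\ a \in k, b \in k, a * u + b * v != 0 & p = pcl (a * u + b * v)].

Definition is_line (S : Proj -> Prop) : Prop :=
  exists u v, indep2 u v /\ forall p, S p <-> pline u v p.

End Proj.

Section Maps.
Variables (K : fieldType) (k : divringClosed K) (K' : fieldType) (k' : divringClosed K').

Definition is_group_hom (phi : Proj k' -> Proj k) : Prop :=
  forall a b, phi (pmul a b) = pmul (phi a) (phi b).

Definition proj_embedding (phi : Proj k' -> Proj k) : Prop :=
  injective phi /\
  forall S, is_line S -> is_line (fun q => exists p, S p /\ q = phi p).

Definition lifts (phi : Proj k' -> Proj k) (Phi : K' -> K) : Prop :=
  forall x, x != 0 -> phi (pcl k' x) = pcl k (Phi x).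

Definition restricts_iso (Phi : K' -> K) : Prop :=
  (forall x, x \in k' -> Phi x \in k) /\
  (forall y, y \in k -> exists2 x, x \in k' & Phi x = y).
End Maps.

(* Main.v *)
Require Import Defs.
From HB Require Import structures.
From mathcomp Require Import all_boot all_order all_algebra.
From mathcomp Require Import ring.
From Stdlib Require Import Classical ClassicalEpsilon.
Set Implicit Arguments. Unset Strict Implicit. Unset Printing Implicit Defensive.
Import GRing.Theory.
Local Open Scope ring_scope.
Local Open Scope quotient_scope.

Section Gen.
Context {F : fieldType} {s : divringClosed F}.

Lemma pcl_eq (x y : F) : x != 0 -> y != 0 -> (pcl s x = pcl s y) <-> (x / y \in s).
Proof.
move=> hx hy; rewrite /pcl; split.
  by move/eqquotP; simpl; unfold projrel; rewrite !insubdK.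
by move=> h; apply/eqquotP; simpl; unfold projrel; rewrite !insubdK.
Qed.

Lemma pcl_eqE (x y : F) : x != 0 -> y != 0 -> pcl s x = pcl s y ->
  exists c, [/\ c \in s, c != 0 & x = c * y].
Proof.
move=> hx hy /(pcl_eq hx hy) h; exists (x / y); split => //.
  by rewrite mulf_neq0 // invr_eq0.
by rewrite divfK.
Qed.

Lemma pcl_scale (c y : F) : c \in s -> c != 0 -> y != 0 -> pcl s (c * y) = pcl s y.
Proof.
move=> hc c0 hy; apply/pcl_eq => //; first by rewrite mulf_neq0.
by rewrite mulfK.
Qed.

Lemma pcl_repr (a : Proj s) : exists2 x, x != 0 & a = pcl s x.
Proof.
exists (val (repr a)); first exact: (valP (repr a)).
by rewrite /pcl valKd reprK.
Qed.

Lemma pcl_reprE (a : Proj s) : pcl s (val (repr a)) = a.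
Proof. by rewrite /pcl valKd reprK. Qed.

Lemma pcl_mul2 (a b c d : F) : a != 0 -> b != 0 -> c != 0 -> d != 0 ->
  pcl s a = pcl s b -> pcl s c = pcl s d -> pcl s (a * c) = pcl s (b * d).
Proof.
move=> ha hb hc hd /(pcl_eq ha hb) h1 /(pcl_eq hc hd) h2.
apply/pcl_eq; rewrite ?mulf_neq0 //.
have -> : a * c / (b * d) = (a / b) * (c / d) by rewrite invfM; ring.
exact: rpredM.
Qed.

Lemma pmulE (x y : F) : x != 0 -> y != 0 -> pmul (pcl s x) (pcl s y) = pcl s (x * y).
Proof.
move=> hx hy; rewrite /pmul; apply: pcl_mul2 => //.
- by case: (repr (pcl s x)).
- by case: (repr (pcl s y)).
- by have := pcl_reprE (pcl s x).
- by have := pcl_reprE (pcl s y).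
Qed.

Lemma indep2_nz u v : indep2 s u v -> u != 0 /\ v != 0.
Proof.
move=> h; split; apply/eqP => e.
  have [] := h 1 0 (rpred1 _) (rpred0 _); first by rewrite e mulr0 mul0r addr0.
  by move/eqP; rewrite oner_eq0.
have [] := h 0 1 (rpred0 _) (rpred1 _); first by rewrite e mulr0 mul0r addr0.
by move=> _ /eqP; rewrite oner_eq0.
Qed.

Lemma indep2_pcl u v : indep2 s u v -> pcl s u != pcl s v.
Proof.
move=> h; have [hu hv] := indep2_nz h; apply/eqP => /(pcl_eqE hu hv) [c [hc c0 e]].
have [] := h 1 (- c) (rpred1 _) (rpredNr hc).
  by rewrite e mul1r mulNr subrr.
by move=> /eqP; rewrite oner_eq0.
Qed.

Lemma pcl_indep2 u v : u != 0 -> v != 0 -> pcl s u != pcl s v -> indep2 s u v.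
Proof.
move=> hu hv hne a b ha hb e.
have [b0|b0] := eqVneq b 0.
  move: e; rewrite b0 mul0r addr0 => /eqP; rewrite mulf_eq0 (negbTE hu) orbF => /eqP //.
have a0 : a != 0.
  apply/eqP => a0; move: e; rewrite a0 mul0r add0r => /eqP; rewrite mulf_eq0 (negbTE hv) orbF.
  by rewrite (negbTE b0).
exfalso; move/negP: hne; apply; apply/eqP; apply/(pcl_eq hu hv).
have -> : u / v = (a*u+b*v)/(a*v) - b/a by field; rewrite a0 hv.
rewrite e mul0r sub0r.
by rewrite rpredN rpred_div.
Qed.

Lemma indep2_1 x : indep2 s 1 x <-> x \notin s.
Proof.
split.
  move=> h; apply/negP => hx; have [] := h x (-1) hx (rpredNr (rpred1 _)).
    by rewrite mulr1 mulN1r subrr.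
  by move=> _ /eqP; rewrite oppr_eq0 oner_eq0.
move=> hx a b ha hb e.
have [b0|b0] := eqVneq b 0.
  by move: e; rewrite b0 mul0r addr0 mulr1.
exfalso; move/negP: hx; apply.
have -> : x = (a*1+b*x)/b - (a / b) by field; rewrite b0.
rewrite e mul0r sub0r.
by rewrite rpredN rpred_div.
Qed.


Lemma indep3_12 u v w : indep3 s u v w -> indep2 s u v.
Proof.
move=> h a b ha hb e; have [] := h a b 0 ha hb (rpred0 _) => //.
by rewrite mul0r addr0.
Qed.

Lemma indep3_p12 u v w : indep3 s u v w -> indep3 s v u w.
Proof.
move=> h a b c ha hb hc e; have [] := h b a c hb ha hc => //.
by rewrite (addrC (b * u)).
Qed.

Lemma indep3_p23 u v w : indep3 s u v w -> indep3 s u w v.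
Proof.
move=> h a b c ha hb hc e; have [] := h a c b ha hc hb => //.
by rewrite -addrA (addrC (c * v)) addrA.
Qed.

Lemma indep3_ex u v w p q r x : indep3 s u v w -> p \in s -> q \in s -> r \in s ->
  r != 0 -> x = p * u + q * v + r * w -> indep3 s u v x.
Proof.
move=> h hp hq hr r0 ex a b c ha hb hc e.
have E : (a + c * p) * u + (b + c * q) * v + (c * r) * w = 0.
  by apply: etrans e; rewrite ex; ring.
have [h1 h2 h3] := h (a + c * p) (b + c * q) (c * r) (rpredD ha (rpredM hc hp))
  (rpredD hb (rpredM hc hq)) (rpredM hc hr) E.
have c0 : c = 0 by move/eqP: h3; rewrite mulf_eq0 (negbTE r0) orbF => /eqP.
by move: h1 h2; rewrite c0 !mul0r !addr0.
Qed.

Lemma dep_dec u v w : indep2 s u v -> ~ indep3 s u v w ->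
  exists p q, [/\ p \in s, q \in s & w = p * u + q * v].
Proof.
move=> h2 h3; apply: NNPP => hn; apply: h3 => a b c ha hb hc e.
have [c0|c0] := eqVneq c 0.
  have [] := h2 a b ha hb; first by move: e; rewrite c0 mul0r addr0.
  by [].
exfalso; apply: hn; exists (- (a / c)), (- (b / c)); split.
- by rewrite rpredNr // rpred_div.
- by rewrite rpredNr // rpred_div.
have -> : w = (a * u + b * v + c * w) / c - a / c * u - b / c * v by field.
by rewrite e mul0r sub0r; ring.
Qed.

Lemma span_change U' V' U V a1 b1 a2 b2 : indep2 s U' V' -> indep2 s U V ->
  a1 \in s -> b1 \in s -> a2 \in s -> b2 \in s ->
  U = a1 * U' + b1 * V' -> V = a2 * U' + b2 * V' ->
  forall q, @pline _ s U' V' q <-> @pline _ s U V q.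
Proof.
move=> h' h ha1 hb1 ha2 hb2 eU eV q; split.
  case=> [al [be [hal hbe nz ->]]].
  pose d := a1 * b2 - a2 * b1.
  have d0 : d != 0.
    apply/eqP => d0.
    have [x1 x2] : b2 = 0 /\ - b1 = 0.
      apply: h; rewrite ?rpredNr //; rewrite eU eV.
      have -> : b2 * (a1 * U' + b1 * V') + - b1 * (a2 * U' + b2 * V') = d * U' by rewrite /d; ring.
      by rewrite d0 mul0r.
    have [y1 y2] : a2 = 0 /\ - a1 = 0.
      apply: h; rewrite ?rpredNr //; rewrite eU eV.
      have -> : a2 * (a1 * U' + b1 * V') + - a1 * (a2 * U' + b2 * V') = - d * V' by rewrite /d; ring.
      by rewrite d0 oppr0 mul0r.
    have [hU _] := indep2_nz h; move: hU; rewrite eU.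
    by move/eqP: y2; rewrite oppr_eq0 => /eqP ->; rewrite mul0r add0r -oppr_eq0 -mulNr x2 mul0r eqxx.
  have hd : d \in s by rewrite rpredB // rpredM.
  exists ((al * b2 - be * a2) / d), ((be * a1 - al * b1) / d); split.
  - by rewrite rpred_div // rpredB // rpredM.
  - by rewrite rpred_div // rpredB // rpredM.
  - have -> : (al * b2 - be * a2) / d * U + (be * a1 - al * b1) / d * V = al * U' + be * V'.
      by rewrite eU eV; rewrite /d; field.
    by [].
  - by congr (pcl s _); rewrite eU eV /d; field.
case=> [al [be [hal hbe nz ->]]].
exists (al * a1 + be * a2), (al * b1 + be * b2); split.
- by rewrite rpredD // rpredM.
- by rewrite rpredD // rpredM.
- have -> : (al * a1 + be * a2) * U' + (al * b1 + be * b2) * V' = al * U + be * V.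
    by rewrite eU eV; ring.
  by [].
- by congr (pcl s _); rewrite eU eV; ring.
Qed.

End Gen.

Lemma indep2_add_nz (F : fieldType) (s : divringClosed F) U V :
  indep2 s U V -> U + V != 0.
Proof.
move=> h; apply/eqP => e; have [] := h 1 1 (rpred1 _) (rpred1 _).
  by rewrite !mul1r.
by move/eqP; rewrite oner_eq0.
Qed.

Lemma pcl_k (F : fieldType) (s : divringClosed F) a :
  a \in s -> a != 0 -> pcl s a = pcl s 1.
Proof. by move=> ha a0; apply/pcl_eq; rewrite ?oner_neq0 // divr1. Qed.

Lemma coef3 (F : fieldType) (s : divringClosed F) A B C x y z x' y' z' :
  indep3 s A B C -> x \in s -> y \in s -> z \in s -> x' \in s -> y' \in s -> z' \in s ->
  x * A + y * B + z * C != 0 -> x' * A + y' * B + z' * C != 0 ->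
  pcl s (x * A + y * B + z * C) = pcl s (x' * A + y' * B + z' * C) ->
  exists c, [/\ c \in s, c != 0, x = c * x', y = c * y' & z = c * z'].
Proof.
move=> h hx hy hz hx' hy' hz' n1 n2 /(pcl_eqE n1 n2) [c [hc c0 e]].
have E : (x - c * x') * A + (y - c * y') * B + (z - c * z') * C = 0.
  by apply: etrans (_ : x * A + y * B + z * C - c * (x' * A + y' * B + z' * C) = 0); [ring | rewrite e subrr].
have [] := h _ _ _ (rpredB hx (rpredM hc hx')) (rpredB hy (rpredM hc hy'))
  (rpredB hz (rpredM hc hz')) E.
by move=> /eqP; rewrite subr_eq0 => /eqP -> /eqP; rewrite subr_eq0 => /eqP -> /eqP;
  rewrite subr_eq0 => /eqP ->; exists c.
Qed.

Lemma indep3_nz (F : fieldType) (s : divringClosed F) A B C x y z :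
  indep3 s A B C -> x \in s -> y \in s -> z \in s -> x != 0 ->
  x * A + y * B + z * C != 0.
Proof.
move=> h hx hy hz x0; apply/eqP => e; have [] := h _ _ _ hx hy hz e.
by move=> x0'; rewrite x0' eqxx in x0.
Qed.

Lemma ind3_add13 (F : fieldType) (s : divringClosed F) X Y Z :
  indep3 s X Y Z -> indep3 s (X + Z) Y Z.
Proof.
move=> h; apply: indep3_p12; apply: indep3_p23.
apply: (indep3_ex (indep3_p23 (indep3_p12 h)) (rpred0 _) (rpred1 _) (rpred1 _) (oner_neq0 _)).
ring.
Qed.

Lemma ind3_add23 (F : fieldType) (s : divringClosed F) X Y Z :
  indep3 s X Y Z -> indep3 s X (Y + Z) Z.
Proof.
move=> h; apply: indep3_p23.
apply: (indep3_ex (indep3_p23 h) (rpred0 _) (rpred1 _) (rpred1 _) (oner_neq0 _)).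
ring.
Qed.

Lemma ind_repl (F : fieldType) (s : divringClosed F) v z p q x :
  indep3 s 1 v z -> p \in s -> q \in s -> q != 0 -> x = p + q * v -> indep3 s 1 x z.
Proof.
move=> h hp hq q0 ex; apply: indep3_p23.
by apply: (indep3_ex (indep3_p23 h) hp (rpred0 _) hq q0); rewrite ex; ring.
Qed.

Lemma ind_dep (F : fieldType) (s : divringClosed F) v w :
  v \notin s -> w \notin s -> ~ indep3 s 1 v w ->
  exists p q, [/\ p \in s, q \in s, q != 0 & w = p + q * v].
Proof.
move=> hv hw hn.
have [p [q [hp hq ew]]] := dep_dec (proj2 (indep2_1 v) hv) hn.
exists p, q; split => //; last by rewrite ew mulr1.
apply: contraNneq hw => q0; rewrite ew q0 mul0r addr0 mulr1 //.
Qed.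

Lemma ind_notin (F : fieldType) (s : divringClosed F) v w :
  indep3 s 1 v w -> v \notin s /\ w \notin s.
Proof.
move=> h; split; apply/(indep2_1 _).
  exact: indep3_12 h.
exact: indep3_12 (indep3_p23 h).
Qed.

Section Main.
Variables (K : fieldType) (k : divringClosed K) (K' : fieldType) (k' : divringClosed K').
Variable phi : Proj k' -> Proj k.
Hypothesis hhom : is_group_hom phi.
Hypothesis hemb : proj_embedding phi.
Hypothesis hdeg' : degree_ge3 k'.

Notation P := (pcl k).
Notation P' := (pcl k').

Lemma phi_inj : injective phi.
Proof. by case: hemb. Qed.

Lemma lift_ex x : exists2 X, X != 0 & phi (P' x) = P X.
Proof. exact: pcl_repr. Qed.

Lemma phi_mul x y X Y : x != 0 -> y != 0 -> X != 0 -> Y != 0 ->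
  phi (P' x) = P X -> phi (P' y) = P Y -> phi (P' (x * y)) = P (X * Y).
Proof.
move=> x0 y0 X0 Y0 hx hy; rewrite -pmulE // hhom hx hy pmulE //.
Qed.

Lemma phi1 : phi (P' 1) = P 1.
Proof.
have [X X0 hX] := lift_ex 1.
have := phi_mul (oner_neq0 _) (oner_neq0 _) X0 X0 hX hX.
rewrite mulr1 hX => /(pcl_eq X0 (mulf_neq0 X0 X0)).
rewrite invfM mulrA divff // mul1r rpredV => hXk.

by apply: pcl_k.
Qed.

Lemma lift_indep2 x y X Y : X != 0 -> Y != 0 ->
  phi (P' x) = P X -> phi (P' y) = P Y -> P' x != P' y -> indep2 k X Y.
Proof.
move=> X0 Y0 hx hy hne; apply: pcl_indep2 => //; rewrite -hx -hy.
by apply/eqP => /phi_inj /eqP; apply/negP.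
Qed.

Lemma LL u v U V : indep2 k' u v -> U != 0 -> V != 0 ->
  phi (P' u) = P U -> phi (P' v) = P V ->
  forall q, (exists p, @pline _ k' u v p /\ q = phi p) <-> @pline _ k U V q.
Proof.
move=> huv U0 V0 hu hv.
have [u0 v0] := indep2_nz huv.
case: hemb => _ /(_ (@pline _ k' u v)) [].
  by exists u, v; split.
move=> U' [V' [hind himg]] q.
have inl : forall x, x \in [:: u; v] -> @pline _ k' u v (P' x).
  move=> x; rewrite !inE => /orP [] /eqP ->.
    exists 1, 0; rewrite rpred1 rpred0 mul1r mul0r addr0; split => //.
  exists 0, 1; rewrite rpred1 rpred0 mul1r mul0r add0r; split => //.
have getc : forall x X, x \in [:: u; v] -> X != 0 -> phi (P' x) = P X ->
    exists a b, [/\ a \in k, b \in k & X = a * U' + b * V'].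
  move=> x X hx X0 hX.
  have : @pline _ k U' V' (P X) by apply/himg; exists (P' x); split => //; exact: inl.
  case=> [a [b [ha hb nz e]]].
  have [c [hc c0 ->]] := pcl_eqE X0 nz e.
  exists (c * a), (c * b); split; rewrite ?rpredM //; ring.
have [a1 [b1 [ha1 hb1 eU]]] := getc u U (mem_head _ _) U0 hu.
have vin : v \in [:: u; v] by rewrite !inE eqxx orbT.
have [a2 [b2 [ha2 hb2 eV]]] := getc v V vin V0 hv.
have hUV : indep2 k U V by apply: (lift_indep2 U0 V0 hu hv); exact: indep2_pcl.
rewrite himg; exact: span_change hind hUV ha1 hb1 ha2 hb2 eU eV q.
Qed.

Lemma LLf u v U V a b : indep2 k' u v -> U != 0 -> V != 0 ->
  phi (P' u) = P U -> phi (P' v) = P V -> a \in k' -> b \in k' -> a * u + b * v != 0 ->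
  exists al be, [/\ al \in k, be \in k, al * U + be * V != 0 &
     phi (P' (a * u + b * v)) = P (al * U + be * V)].
Proof.
move=> huv U0 V0 hu hv ha hb nz.
have : @pline _ k U V (phi (P' (a * u + b * v))).
  by apply/(LL huv U0 V0 hu hv); exists (P' (a * u + b * v)); split => //; exists a, b.
by case=> [al [be [hal hbe nz' e]]]; exists al, be; split.
Qed.

Lemma lift_indep3 u v w U V W : indep3 k' u v w -> U != 0 -> V != 0 -> W != 0 ->
  phi (P' u) = P U -> phi (P' v) = P V -> phi (P' w) = P W -> indep3 k U V W.
Proof.
move=> h U0 V0 W0 hu hv hw a b c ha hb hc e.
have huv := indep3_12 h.
have hUV : indep2 k U V by apply: (lift_indep2 U0 V0 hu hv); exact: indep2_pcl.
have [c0|c0] := eqVneq c 0.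
  have [] := hUV a b ha hb; first by move: e; rewrite c0 mul0r addr0.
  by move=> -> ->.
exfalso.
have [_ w0] := indep2_nz (indep3_12 (indep3_p23 h)).
have eW : W = (- (a / c)) * U + (- (b / c)) * V.
  have -> : W = (a * U + b * V + c * W) / c - a / c * U - b / c * V by field.
  by rewrite e mul0r sub0r; ring.
have : @pline _ k U V (P W).
  exists (- (a / c)), (- (b / c)); rewrite -eW; split => //; by rewrite rpredNr // rpred_div.
move/(LL huv U0 V0 hu hv) => [p [[a' [b' [ha' hb' nz ->]]]]].
rewrite -hw => /phi_inj /(pcl_eqE w0 nz) [d [hd d0 ew]].
have E : d * a' * u + d * b' * v + (-1) * w = 0 by rewrite ew; ring.
have [_ _] := h (d * a') (d * b') (-1) (rpredM hd ha') (rpredM hd hb') (rpredNr (rpred1 _)) E.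
by move/eqP; rewrite oppr_eq0 oner_eq0.
Qed.

Definition compat u v U V := [/\ U != 0, V != 0, phi (P' u) = P U,
  phi (P' v) = P V & phi (P' (u + v)) = P (U + V)].

Lemma compat_uniq u v U V V' : indep2 k' u v -> compat u v U V -> compat u v U V' -> V' = V.
Proof.
move=> huv [U0 V0 hu hv huv1] [_ V'0 _ hv' huv2].
have hp := indep2_pcl huv.
have hUV := lift_indep2 U0 V0 hu hv hp.
have hUV' := lift_indep2 U0 V'0 hu hv' hp.
have := hv'; rewrite hv => /esym /(pcl_eqE V'0 V0) [c [hc c0 eV]].
have := huv2; rewrite huv1 => /esym /(pcl_eqE (indep2_add_nz hUV') (indep2_add_nz hUV)).
case=> [d [hd d0 e]].
have E : (1 - d) * U + (c - d) * V = 0 by move: e; rewrite eV => e; apply: etrans (_ : U + c * V - d * (U + V) = 0); [ring | rewrite e subrr].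
have [x1 x2] := hUV (1 - d) (c - d) (rpredB (rpred1 _) hd) (rpredB hc hd) E.
move: x1 x2 => /eqP; rewrite subr_eq0 => /eqP d1 /eqP; rewrite subr_eq0 -d1 => /eqP c1.
by rewrite eV c1 mul1r.
Qed.

Lemma compat_ex u v U : indep2 k' u v -> U != 0 -> phi (P' u) = P U ->
  exists V, compat u v U V.
Proof.
move=> huv U0 hu.
have [u0 v0] := indep2_nz huv.
have [V0 V00 hv] := lift_ex v.
have nz : 1 * u + 1 * v != 0 by rewrite !mul1r; exact: indep2_add_nz huv.
have [al [be [hal hbe nz' e]]] := LLf huv U0 V00 hu hv (rpred1 _) (rpred1 _) nz.
move: e; rewrite !mul1r => e.
have al0 : al != 0.
  apply/eqP => al0; move: e nz'; rewrite al0 mul0r add0r => e nz'.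
  have be0 : be != 0 by apply: contraNneq nz' => ->; rewrite mul0r.
  move: e; rewrite pcl_scale // -hv => /phi_inj /(pcl_eqE (indep2_add_nz huv) v0).
  case=> [c [hc c0 e]].
  have [] := huv 1 (1 - c) (rpred1 _) (rpredB (rpred1 _) hc).
    by move: e => /eqP; rewrite -subr_eq0 => /eqP e; rewrite -e; ring.
  by move/eqP; rewrite oner_eq0.
have be0 : be != 0.
  apply/eqP => be0; move: e nz'; rewrite be0 mul0r addr0 => e nz'.
  move: e; rewrite pcl_scale // -hu => /phi_inj /(pcl_eqE (indep2_add_nz huv) u0).
  case=> [c [hc c0 e]].
  have [] := huv (1 - c) 1 (rpredB (rpred1 _) hc) (rpred1 _).
    by move: e => /eqP; rewrite -subr_eq0 => /eqP e; rewrite -e; ring.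
  by move=> _ /eqP; rewrite oner_eq0.
exists (be / al * V0); split => //.
- by rewrite !mulf_neq0 // invr_eq0.
- by rewrite hv pcl_scale // ?rpred_div // mulf_neq0 // invr_eq0.
- rewrite e.
  have -> : U + be / al * V0 = al^-1 * (al * U + be * V0) by field.
  by rewrite pcl_scale // ?rpredV // invr_eq0.
Qed.


Lemma compat_add u v w U V W : indep3 k' u v w -> compat u v U V -> compat u w U W ->
  compat u (v + w) U (V + W).
Proof.
move=> h [U0 V0 hu hv huv] [_ W0 _ hw huw].
have hUVW : indep3 k U V W := lift_indep3 h U0 V0 W0 hu hv hw.
have k1 := rpred1 k. have k0 := rpred0 k.
have k1' := rpred1 k'.
have i1 : indep2 k' (u + v) w.
  apply: indep3_12; apply: indep3_p23; apply: indep3_p12; apply: indep3_p23.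
  by apply: (indep3_ex (indep3_p23 h) k1' (rpred0 _) k1' (oner_neq0 _)); ring.
have i2 : indep2 k' (u + w) v.
  apply: indep3_12; apply: indep3_p12; apply: indep3_p23; apply: indep3_p12.
  by apply: (indep3_ex h k1' (rpred0 _) k1' (oner_neq0 _)); ring.
have i3 : indep2 k' u (u + v + w).
  apply: indep3_12; apply: indep3_p23.
  by apply: (indep3_ex (indep3_p23 h) k1' k1' k1' (oner_neq0 _)); ring.
have hvw : indep2 k' v w := indep3_12 (indep3_p23 (indep3_p12 h)).
have nUV : U + V != 0.
  by have := indep3_nz hUVW k1 k1 k0 (oner_neq0 _); rewrite !mul1r mul0r addr0.
have nUW : U + W != 0.
  by have := indep3_nz hUVW k1 k0 k1 (oner_neq0 _); rewrite !mul1r mul0r addr0.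
have nUVW : U + V + W != 0.
  by have := indep3_nz hUVW k1 k1 k1 (oner_neq0 _); rewrite !mul1r.
have s1 : phi (P' (u + v + w)) = P (U + V + W).
  have n1 : 1 * (u + v) + 1 * w != 0 by rewrite !mul1r; exact: indep2_add_nz i1.
  have [al [be [hal hbe nz1 e1]]] := LLf i1 nUV W0 huv hw k1' k1' n1.
  have n2 : 1 * (u + w) + 1 * v != 0 by rewrite !mul1r; exact: indep2_add_nz i2.
  have [ga [de [hga hde nz2 e2]]] := LLf i2 nUW V0 huw hv k1' k1' n2.
  have ee : P (al * U + al * V + be * W) = P (ga * U + de * V + ga * W).
    have -> : al * U + al * V + be * W = al * (U + V) + be * W by ring.
    have -> : ga * U + de * V + ga * W = ga * (U + W) + de * V by ring.
    by rewrite -e1 -e2 !mul1r; congr (phi (P' _)); ring.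
  have nz1' : al * U + al * V + be * W != 0.
    by have -> : al * U + al * V + be * W = al * (U + V) + be * W by ring.
  have nz2' : ga * U + de * V + ga * W != 0.
    by have -> : ga * U + de * V + ga * W = ga * (U + W) + de * V by ring.
  have [c [hc c0 x1 x2 x3]] := coef3 hUVW hal hal hbe hga hde hga nz1' nz2' ee.
  have beal : be = al by rewrite x3 x1.
  have al0 : al != 0 by apply: contraNneq nz1 => al0; rewrite beal al0 !mul0r addr0.
  move: e1; rewrite !mul1r beal -mulrDr => ->.
  by rewrite pcl_scale.
have s2 : phi (P' (v + w)) = P (V + W).
  have n1 : 1 * v + 1 * w != 0 by rewrite !mul1r; exact: indep2_add_nz hvw.
  have [al [be [hal hbe nz1 e1]]] := LLf hvw V0 W0 hv hw k1' k1' n1.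
  have km1 : -1 \in k' by rewrite rpredNr.
  have n2 : -1 * u + 1 * (u + v + w) != 0.
    have -> : -1 * u + 1 * (u + v + w) = v + w by ring.
    exact: indep2_add_nz hvw.
  have [ga [de [hga hde nz2 e2]]] := LLf i3 U0 nUVW hu s1 km1 k1' n2.
  have ee : P (0 * U + al * V + be * W) = P ((ga + de) * U + de * V + de * W).
    have -> : 0 * U + al * V + be * W = al * V + be * W by ring.
    have -> : (ga + de) * U + de * V + de * W = ga * U + de * (U + V + W) by ring.
    by rewrite -e1 -e2; congr (phi (P' _)); ring.
  have nz1' : 0 * U + al * V + be * W != 0 by rewrite mul0r add0r.
  have nz2' : (ga + de) * U + de * V + de * W != 0.
    by have -> : (ga + de) * U + de * V + de * W = ga * U + de * (U + V + W) by ring.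
  have [c [hc c0 x1 x2 x3]] := coef3 hUVW k0 hal hbe (rpredD hga hde) hde hde nz1' nz2' ee.
  have beal : be = al by rewrite x3 x2.
  have al0 : al != 0 by apply: contraNneq nz1 => al0; rewrite beal al0 !mul0r addr0.
  move: e1; rewrite !mul1r beal -mulrDr => ->.
  rewrite pcl_scale //; apply: contraNneq nz1 => e; by rewrite beal -mulrDr e mulr0.
split => //; first by have := indep3_nz (indep3_p12 hUVW) k1 k0 k1 (oner_neq0 _); rewrite !mul1r mul0r addr0.
by rewrite addrA s1 addrA.
Qed.

Lemma deg3 v : v \notin k' -> exists z, indep3 k' 1 v z.
Proof.
move=> hv; apply: NNPP => hn.
have hnot : forall z, ~ indep3 k' 1 v z by move=> z hz; apply: hn; exists z.
have h1v := proj2 (indep2_1 v) hv.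
case: hdeg' => [u1 [u2 [u3 h]]].
have [p1 [q1 [hp1 hq1 e1]]] := dep_dec h1v (hnot u1).
have [p2 [q2 [hp2 hq2 e2]]] := dep_dec h1v (hnot u2).
have [p3 [q3 [hp3 hq3 e3]]] := dep_dec h1v (hnot u3).
pose c1 := p2 * q3 - p3 * q2. pose c2 := p3 * q1 - p1 * q3. pose c3 := p1 * q2 - p2 * q1.
have E : c1 * u1 + c2 * u2 + c3 * u3 = 0 by rewrite e1 e2 e3 /c1 /c2 /c3; ring.
have [_ _ x3] := h c1 c2 c3 (rpredB (rpredM hp2 hq3) (rpredM hp3 hq2))
  (rpredB (rpredM hp3 hq1) (rpredM hp1 hq3)) (rpredB (rpredM hp1 hq2) (rpredM hp2 hq1)) E.
have E2 : q2 * u1 + (- q1) * u2 + 0 * u3 = 0.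
  by apply: etrans (_ : c3 * 1 = 0); [rewrite e1 e2 /c3; ring | rewrite x3 mul0r].
have [y1 y2 _] := h _ _ _ hq2 (rpredNr hq1) (rpred0 _) E2.
have E3 : p2 * u1 + (- p1) * u2 + 0 * u3 = 0.
  by apply: etrans (_ : - c3 * v = 0); [rewrite e1 e2 /c3; ring | rewrite x3 oppr0 mul0r].
have [z1 z2 _] := h _ _ _ hp2 (rpredNr hp1) (rpred0 _) E3.
have p10 : p1 = 0 by rewrite -[p1]opprK z2 oppr0.
have q10 : q1 = 0 by rewrite -[q1]opprK y2 oppr0.
have E4 : 1 * u1 + 0 * u2 + 0 * u3 = 0 by rewrite e1 p10 q10; ring.
have [] := h _ _ _ (rpred1 _) (rpred0 _) (rpred0 _) E4.
by move/eqP; rewrite oner_eq0.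
Qed.

Definition t0 : K' := epsilon (inhabits 0) (fun t => t \notin k').

Lemma t0P : t0 \notin k'.
Proof.
apply: (epsilon_spec (inhabits 0) (fun t : K' => t \notin k')).
case: hdeg' => [u1 [u2 [u3 h]]].
have [u10 u20] := indep2_nz (indep3_12 h).
case: (boolP (u1 \in k')) => h1; last by exists u1.
case: (boolP (u2 \in k')) => h2; last by exists u2.
have E : u2 * u1 + (- u1) * u2 + 0 * u3 = 0 by ring.
have [x1 _ _] := h _ _ _ h2 (rpredNr h1) (rpred0 _) E.
by rewrite x1 eqxx in u20.
Qed.

Definition N (x : K') : K := epsilon (inhabits 0) (fun V => compat 1 x 1 V).

Lemma Nspec x : x \notin k' -> compat 1 x 1 (N x).
Proof.
move=> hx; apply: (epsilon_spec (inhabits 0) (fun V => compat 1 x 1 V)).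
exact: compat_ex (proj2 (indep2_1 x) hx) (oner_neq0 _) phi1.
Qed.

Lemma Nlift x : x \notin k' -> N x != 0 /\ phi (P' x) = P (N x).
Proof. by move=> /Nspec [_ ? _ ? _]. Qed.

Lemma Ad v w : indep3 k' 1 v w -> N (v + w) = N v + N w.
Proof.
move=> h; have [hv hw] := ind_notin h.
have h2 : indep3 k' 1 v (v + w).
  by apply: (indep3_ex h (rpred0 _) (rpred1 _) (rpred1 _) (oner_neq0 _)); ring.
have [_ hvw] := ind_notin h2.
apply: esym; apply: (compat_uniq (proj2 (indep2_1 _) hvw) (Nspec hvw)).
exact: compat_add h (Nspec hv) (Nspec hw).
Qed.

Definition f (x : K') : K := if x \in k' then N (x + t0) - N t0 else N x.

Lemma f_nk x : x \notin k' -> f x = N x.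
Proof. by move=> hx; rewrite /f (negbTE hx). Qed.

Lemma f_k a : a \in k' -> f a = N (a + t0) - N t0.
Proof. by move=> ha; rewrite /f ha. Qed.

Lemma add_notin a w : a \in k' -> w \notin k' -> a + w \notin k'.
Proof.
move=> ha hw; apply: contra hw => h.
have -> : w = (a + w) - a by ring.
by rewrite rpredB.
Qed.

Lemma B a w : a \in k' -> w \notin k' -> N (a + w) = f a + N w.
Proof.
move=> ha hw; rewrite f_k //.
have k1' := rpred1 k'. have o1 := oner_neq0 K'.
have case1 : forall w, indep3 k' 1 t0 w -> N (a + w) = N (a + t0) - N t0 + N w.
  move=> w' h.
  have e1 : N (a + t0 + w') = N (a + t0) + N w'.
    by apply: Ad; apply: (ind_repl h ha k1' o1); ring.
  have e2 : N (a + w' + t0) = N (a + w') + N t0.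
    by apply: Ad; apply: (ind_repl (indep3_p23 h) ha k1' o1); ring.
  have e3 : a + t0 + w' = a + w' + t0 by ring.
  rewrite e3 e2 in e1.
  by apply: (addIr (N t0)); rewrite e1; ring.
case: (classic (indep3 k' 1 t0 w)) => hc; first exact: case1.
have [p [q [hp hq q0 ew]]] := ind_dep t0P hw hc.
have [z hz] := deg3 t0P.
have hwz : indep3 k' 1 w z by apply: (ind_repl hz hp hq q0).
have e1 : N (a + w + z) = N (a + w) + N z.
  by apply: Ad; apply: (ind_repl hwz ha k1' o1); ring.
have e2 : N (a + z + w) = N (a + z) + N w.
  by apply: Ad; apply: (ind_repl (indep3_p23 hwz) ha k1' o1); ring.
have e3 : a + w + z = a + z + w by ring.
rewrite e3 e2 (case1 _ hz) in e1.
by apply: (addIr (N z)); rewrite -e1; ring.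
Qed.

Lemma fB a w : a \in k' -> w \notin k' -> f (a + w) = f a + f w.
Proof.
move=> ha hw; rewrite (f_nk hw) (f_nk (add_notin ha hw)); exact: B.
Qed.

Lemma f0 : f 0 = 0.
Proof. by rewrite f_k ?rpred0 // add0r subrr. Qed.

Lemma fk a : a \in k' -> a != 0 -> f a \in k /\ f a != 0.
Proof.
move=> ha a0; rewrite f_k //.
have [z hz] := deg3 t0P.
have [_ hzn] := ind_notin hz.
have k1' := rpred1 k'. have km1' : -1 \in k' by rewrite rpredNr.
have k1 := rpred1 k. have k0 := rpred0 k.
have h3 : indep3 k' (a + t0) t0 z.
  apply: indep3_p12; apply: indep3_p23.
  apply: (indep3_ex (indep3_p23 (indep3_p12 hz)) k1' (rpred0 _) ha a0); ring.
have hat := add_notin ha t0P.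
have [F10 hF1] := Nlift hat.
have [F20 hF2] := Nlift t0P.
have [F30 hF3] := Nlift hzn.
have hF := lift_indep3 h3 F10 F20 F30 hF1 hF2 hF3.
have pa : phi (P' a) = P 1 by rewrite pcl_k // phi1.
have n1 : 1 * (a + t0) + -1 * t0 != 0 by have -> : 1 * (a + t0) + -1 * t0 = a by ring.
have [al [be [hal hbe nz1 e1]]] := LLf (indep3_12 h3) F10 F20 hF1 hF2 k1' km1' n1.
move: e1; have -> : 1 * (a + t0) + -1 * t0 = a by ring.
rewrite pa => e1.
have h4 : indep3 k' (a + t0 + z) (t0 + z) z by apply: ind3_add13; apply: ind3_add23.
have htz : t0 + z \notin k' by have [] := ind_notin (ind3_add23 hz).
have hatz : a + t0 + z \notin k' by rewrite -addrA; apply: add_notin.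
have eN1 : N (a + t0 + z) = N (a + t0) + N z.
  by apply: Ad; apply: (ind_repl hz ha k1' (oner_neq0 _)); ring.
have eN2 : N (t0 + z) = N t0 + N z by apply: Ad.
have [G10 hG1] := Nlift hatz. have [G20 hG2] := Nlift htz.
rewrite eN1 in G10 hG1. rewrite eN2 in G20 hG2.
have n2 : 1 * (a + t0 + z) + -1 * (t0 + z) != 0.
  by have -> : 1 * (a + t0 + z) + -1 * (t0 + z) = a by ring.
have [ga [de [hga hde nz2 e2]]] := LLf (indep3_12 h4) G10 G20 hG1 hG2 k1' km1' n2.
move: e2; have -> : 1 * (a + t0 + z) + -1 * (t0 + z) = a by ring.
rewrite pa => e2.
have ee : P (al * N (a + t0) + be * N t0 + 0 * N z) =
          P (ga * N (a + t0) + de * N t0 + (ga + de) * N z).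
  rewrite mul0r addr0 -e1 e2; congr (P _); ring.
have nz1' : al * N (a + t0) + be * N t0 + 0 * N z != 0 by rewrite mul0r addr0.
have nz2' : ga * N (a + t0) + de * N t0 + (ga + de) * N z != 0.
  by have -> : ga * N (a + t0) + de * N t0 + (ga + de) * N z =
    ga * (N (a + t0) + N z) + de * (N t0 + N z) by ring.
have [c [hc c0 x1 x2 x3]] := coef3 hF hal hbe k0 hga hde (rpredD hga hde) nz1' nz2' ee.
have bea : be = - al.
  have : c * (ga + de) == 0 by rewrite -x3.
  rewrite mulf_eq0 (negbTE c0) /= => /eqP gd.
  by rewrite x1 x2 -mulrN; congr (_ * _); apply/eqP; rewrite -addr_eq0 addrC gd.
have al0 : al != 0 by apply: contraNneq nz1 => al0; rewrite bea al0 oppr0 !mul0r addr0.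
move: e1 => /esym /(pcl_eqE nz1 (oner_neq0 _)) [e [he e0 ee1]].
have -> : N (a + t0) - N t0 = al^-1 * (al * N (a + t0) + be * N t0) by rewrite bea; field.
rewrite ee1 mulr1; split; first by rewrite rpredM // rpredV.
by rewrite mulf_neq0 // invr_eq0.
Qed.

Lemma Lf x : x != 0 -> f x != 0 /\ phi (P' x) = P (f x).
Proof.
move=> x0; case: (boolP (x \in k')) => hx; last by rewrite f_nk //; exact: Nlift.
have [fk1 fk0] := fk hx x0; split => //.
by rewrite pcl_k // phi1 (pcl_k fk1 fk0).
Qed.

Lemma fD x y : f (x + y) = f x + f y.
Proof.
have k1' := rpred1 k'. have o1 := oner_neq0 K'.
case: (boolP (x \in k')) => hx; case: (boolP (y \in k')) => hy.
- rewrite (f_k (rpredD hx hy)).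
  have hyt := add_notin hy t0P.
  have -> : x + y + t0 = x + (y + t0) by ring.
  rewrite (B hx hyt) (B hy t0P); ring.
- exact: fB.
- by rewrite addrC fB // addrC.
rewrite (f_nk hx) (f_nk hy).
case: (classic (indep3 k' 1 x y)) => hc.
  have hc2 : indep3 k' 1 x (x + y).
    by apply: (indep3_ex hc (rpred0 _) k1' k1' o1); ring.
  have [_ hxy] := ind_notin hc2.
  by rewrite (f_nk hxy); exact: Ad.
have [p [q [hp hq q0 ey]]] := ind_dep hx hy hc.
have [z hz] := deg3 hx.
have [_ hzn] := ind_notin hz.
have hyz : indep3 k' 1 y z by apply: (ind_repl hz hp hq q0).
have e1 : N (x + (y + z)) = N x + N (y + z).
  by apply: Ad; apply: (indep3_ex hz hp hq k1' o1); rewrite ey; ring.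
rewrite (Ad hyz) in e1.
case: (boolP (x + y \in k')) => hxy.
  have e2 : N (x + y + z) = f (x + y) + N z by rewrite B.
  rewrite -addrA e1 in e2.
  by apply: (addIr (N z)); rewrite -e2; ring.
have q10 : 1 + q != 0.
  apply: contraNneq hxy => e; rewrite ey.
  have -> : x + (p + q * x) = p + (1 + q) * x by ring.
  by rewrite e mul0r addr0.
have e2 : N (x + y + z) = N (x + y) + N z.
  by apply: Ad; apply: (ind_repl hz hp (rpredD k1' hq) q10); rewrite ey; ring.
rewrite -addrA e1 (f_nk hxy) in e2 *.
by apply: (addIr (N z)); rewrite -e2; ring.
Qed.

Lemma notin_nz x : x \notin k' -> x != 0.
Proof. by apply: contraNneq => ->; rewrite rpred0. Qed.

Lemma f1 : f 1 = 1.
Proof.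
have h1 := rpred1 k'.
have [_ Nt0 _ ht0 h1t0] := Nspec t0P.
have h1t := add_notin h1 t0P.
have [fn hl] := Lf (notin_nz h1t).
have hi : indep2 k 1 (N t0).
  exact: lift_indep2 (oner_neq0 _) Nt0 phi1 ht0 (indep2_pcl (proj2 (indep2_1 _) t0P)).
have e0 : P (1 + N t0) = P (f 1 + N t0) by rewrite -h1t0 hl (fB h1 t0P) (f_nk t0P).
have nz2 : f 1 + N t0 != 0 by move: fn; rewrite (fB h1 t0P) (f_nk t0P).
have [c [hc c0 e]] := pcl_eqE (indep2_add_nz hi) nz2 e0.
have [f1k _] := fk h1 (oner_neq0 _).
have E : (1 - c * f 1) * 1 + (1 - c) * N t0 = 0.
  by apply: etrans (_ : 1 + N t0 - c * (f 1 + N t0) = 0); [ring | rewrite -e subrr].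
have [x1 x2] := hi _ _ (rpredB (rpred1 _) (rpredM hc f1k)) (rpredB (rpred1 _) hc) E.
move/eqP: x2; rewrite subr_eq0 => /eqP c1.
by move/eqP: x1; rewrite subr_eq0 -c1 mul1r => /eqP.
Qed.


Lemma fM x y : f (x * y) = f x * f y.
Proof.
have [->|y0] := eqVneq y 0; first by rewrite mulr0 f0 mulr0.
have main : forall x, x \notin k' -> f (x * y) = f x * f y.
  clear x; move=> x hx.
  have x0 := notin_nz hx.
  have [fy0 hy] := Lf y0. have [fx0 hxl] := Lf x0.
  have hxy := phi_mul x0 y0 fx0 fy0 hxl hy.
  have xy0 : x * y != 0 by rewrite mulf_neq0.
  have [fxy0 hxy'] := Lf xy0.
  have [c [hc c0 ec]] := pcl_eqE fxy0 (mulf_neq0 fx0 fy0) (etrans (esym hxy') hxy).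
  have h1x := add_notin (rpred1 _) hx.
  have x10 := notin_nz h1x.
  have f1x : f (1 + x) = 1 + f x by rewrite fB ?rpred1 // f1.
  have [f1x0 h1xl] := Lf x10.
  have h2 := phi_mul x10 y0 f1x0 fy0 h1xl hy.
  have [g0 hg] := Lf (mulf_neq0 x10 y0).
  have [d [hd d0 ed]] := pcl_eqE g0 (mulf_neq0 f1x0 fy0) (etrans (esym hg) h2).
  have hne : P' y != P' (x * y).
    apply/eqP => /(pcl_eqE y0 xy0) [e [he e0 ee]].
    have : (e * x - 1) * y = 0 by rewrite mulrBl -mulrA -ee mul1r subrr.
    move/eqP; rewrite mulf_eq0 (negbTE y0) orbF subr_eq0 => /eqP ex.
    move/negP: hx; apply.
    by rewrite -(mulKf e0 x) ex mulr1 rpredV.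
  have hi := lift_indep2 fy0 (mulf_neq0 fx0 fy0) hy hxy hne.
  have e3 : f ((1 + x) * y) = f y + c * (f x * f y) by rewrite mulrDl mul1r fD ec.
  rewrite ed f1x in e3.
  have E : (1 - d) * f y + (c - d) * (f x * f y) = 0.
    by apply: etrans (_ : f y + c * (f x * f y) - d * ((1 + f x) * f y) = 0); [ring | rewrite -e3 subrr].
  have [x1 x2] := hi _ _ (rpredB (rpred1 _) hd) (rpredB hc hd) E.
  move/eqP: x1; rewrite subr_eq0 => /eqP d1.
  move/eqP: x2; rewrite subr_eq0 -d1 => /eqP c1.
  by rewrite ec c1 mul1r.
case: (boolP (x \in k')) => hx; last exact: main.
have e1 := main (x + t0) (add_notin hx t0P).
rewrite mulrDl !fD (main t0 t0P) mulrDl in e1.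
exact: (addIr _ e1).
Qed.

Lemma fN x : f (- x) = - f x.
Proof. by apply: (addIr (f x)); rewrite -fD addNr f0 addNr. Qed.

Lemma fsub : {morph f : x y / x - y}.
Proof. by move=> x y; rewrite fD fN. Qed.

Lemma fmon : GRing.monoid_morphism f.
Proof. by split; [exact: f1 | move=> x y; exact: fM]. Qed.

Definition fmor : {rmorphism K' -> K} :=
  HB.pack f (GRing.isZmodMorphism.Build K' K f fsub) (GRing.isMonoidMorphism.Build K' K f fmon).

Lemma f_into x : x \in k' -> f x \in k.
Proof.
move=> hx; have [->|x0] := eqVneq x 0; first by rewrite f0 rpred0.
by have [] := fk hx x0.
Qed.

Lemma f_onto y : y \in k -> exists2 x, x \in k' & f x = y.
Proof.
move=> hy; have [->|y0] := eqVneq y 0; first by exists 0; rewrite ?rpred0 ?f0.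
have [_ Nt0 _ ht0 _] := Nspec t0P.
have h1t := proj2 (indep2_1 _) t0P.
have hi : indep2 k 1 (N t0).
  exact: lift_indep2 (oner_neq0 _) Nt0 phi1 ht0 (indep2_pcl h1t).
have nz : y * 1 + 1 * N t0 != 0.
  by apply/eqP => /(hi _ _ hy (rpred1 _)) [_ /eqP]; rewrite oner_eq0.
have : @pline _ k 1 (N t0) (P (y * 1 + 1 * N t0)).
  by exists y, 1; split; rewrite ?rpred1.
move/(LL h1t (oner_neq0 _) Nt0 phi1 ht0) => [p [[a [b [ha hb nzp ->]]] e]].
have [fn hl] := Lf nzp.
have [fa fb] := (f_into ha, f_into hb).
have e' : P (y * 1 + 1 * N t0) = P (f a + f b * N t0).
  by rewrite e hl fD !fM f1 mulr1 (f_nk t0P).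
have nz2 : f a + f b * N t0 != 0 by move: fn; rewrite fD !fM f1 mulr1 (f_nk t0P).
have [c [hc c0 ec]] := pcl_eqE nz nz2 e'.
have E : (y - c * f a) * 1 + (1 - c * f b) * N t0 = 0.
  by apply: etrans (_ : y * 1 + 1 * N t0 - c * (f a + f b * N t0) = 0); [ring | rewrite ec subrr].
have [x1 x2] := hi _ _ (rpredB hy (rpredM hc fa)) (rpredB (rpred1 _) (rpredM hc fb)) E.
move/eqP: x1; rewrite subr_eq0 => /eqP x1.
move/eqP: x2; rewrite subr_eq0 => /eqP x2.
have b0 : b != 0 by apply: contra_eq_neq x2 => ->; rewrite f0 mulr0 oner_neq0.
exists (a / b); first by rewrite rpred_div.
have fb0 : f b != 0 by apply: contra_eq_neq x2 => ->; rewrite mulr0 oner_neq0.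
have fbi : f b^-1 = (f b)^-1.
  by apply: (mulfI fb0); rewrite -fM divff // mulfV // f1.
rewrite fM fbi x1.
have -> : (f b)^-1 = c by apply: (mulIf fb0); rewrite mulVf.
by rewrite mulrC.
Qed.

Lemma f_uniq (Psi : {rmorphism K' -> K}) : lifts phi Psi -> Psi =1 f.
Proof.
move=> hl.
have main : forall x, x \notin k' -> Psi x = f x.
  move=> x hx; have x0 := notin_nz hx.
  have [fx0 hx'] := Lf x0.
  have px0 : Psi x != 0 by rewrite fmorph_eq0.
  have [c [hc c0 ec]] := pcl_eqE px0 fx0 (etrans (esym (hl x x0)) hx').
  have h1x := add_notin (rpred1 _) hx.
  have x10 := notin_nz h1x.
  have [f1x0 h1x'] := Lf x10.
  have p1x0 : Psi (1 + x) != 0 by rewrite fmorph_eq0.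
  have [d [hd d0 ed]] := pcl_eqE p1x0 f1x0 (etrans (esym (hl _ x10)) h1x').
  rewrite rmorphD rmorph1 fD f1 ec in ed.
  have hi : indep2 k 1 (f x).
    by apply: lift_indep2 (oner_neq0 _) fx0 phi1 hx' (indep2_pcl (proj2 (indep2_1 _) hx)).
  have fxk : c \in k := hc.
  have E : (1 - d) * 1 + (c - d) * f x = 0.
    by apply: etrans (_ : 1 + c * f x - d * (1 + f x) = 0); [ring | rewrite ed subrr].
  have [x1 x2] := hi _ _ (rpredB (rpred1 _) hd) (rpredB hc hd) E.
  move/eqP: x1; rewrite subr_eq0 => /eqP d1.
  move/eqP: x2; rewrite subr_eq0 -d1 => /eqP c1.
  by rewrite ec c1 mul1r.
move=> x; case: (boolP (x \in k')) => hx; last exact: main.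
have e := main _ (add_notin hx t0P).
rewrite rmorphD fD (main _ t0P) in e.
exact: (addIr _ e).
Qed.

Lemma main_exists : exists Phi : {rmorphism K' -> K},
    (lifts phi Phi /\ restricts_iso k k' Phi) /\
    forall Psi : {rmorphism K' -> K},
      lifts phi Psi -> restricts_iso k k' Psi -> Psi =1 Phi.
Proof.
exists fmor; split; first split.
- by move=> x x0; exact: (proj2 (Lf x0)).
- by split; [exact: f_into | exact: f_onto].
by move=> Psi hl _; exact: f_uniq.
Qed.

End Main.

Theorem mainTheorem18 (K : fieldType) (k : divringClosed K)
    (K' : fieldType) (k' : divringClosed K')
    (hdeg : degree_ge3 k) (hdeg' : degree_ge3 k')
    (phi : Proj k' -> Proj k)
    (hhom : is_group_hom phi) (hemb : proj_embedding phi) :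
  exists Phi : {rmorphism K' -> K},
    (lifts phi Phi /\ restricts_iso k k' Phi) /\
    forall Psi : {rmorphism K' -> K},
      lifts phi Psi -> restricts_iso k k' Psi -> Psi =1 Phi.
Proof. exact: main_exists. Qed.
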